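(* Let $f$ be a function of class $C^2$ on $\mathcal D=[0,1]^2$ with $f(0,0)=f(1,1)=0$. Then for $x\in\mathcal D$, $$\lim_{N\to\infty} N\big(B_N(f\circ A)(x)-f(x)\big)=L_d f(x),$$ where $$L_d f(x)=\frac{x_1(1-x_1)}{2}f_{x_1x_1}(x)+\frac{x_2(1-x_2)}{2d}f_{x_2x_2}(x)-\kappa\, Mx\cdot\nabla f(x).$$
   Context: Fix $d\in(0,1]$ and $\kappa>0$. For each $N$ with $N_2=dN$ an integer, set $N_1=N$, $M=\begin{pmatrix} d & -d\\ -1 & 1\end{pmatrix}$, $A=\mathrm{Id}-\frac{\kappa}{N}M$, and for a function $g$ on $\mathcal D$ $$B_N(g)(x)=\sum_{j_1=0}^{N_1}\sum_{j_2=0}^{N_2}\binom{N_1}{j_1}\binom{N_2}{j_2}x_1^{j_1}(1-x_1)^{N_1-j_1}x_2^{j_2}(1-x_2)^{N_2-j_2}\,g\!\left(\tfrac{j_1}{N_1},\tfrac{j_2}{N_2}\right).$$ Here $(f\circ A)(x)=f(Ax)$. *)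

(* Defs.v *)
From Stdlib Require Import Reals.
From Coquelicot Require Import Coquelicot.
Open Scope R_scope.

Definition D1 (f : R -> R -> R) : R -> R -> R :=
  fun x1 x2 => Derive (fun t => f t x2) x1.
Definition D2 (f : R -> R -> R) : R -> R -> R :=
  fun x1 x2 => Derive (fun t => f x1 t) x2.

Definition C1_R2 (f : R -> R -> R) : Prop :=
  forall x1 x2,
    ex_derive (fun t => f t x2) x1 /\ ex_derive (fun t => f x1 t) x2 /\
    continuity_2d_pt f x1 x2 /\ continuity_2d_pt (D1 f) x1 x2 /\
    continuity_2d_pt (D2 f) x1 x2.

Definition C2_R2 (f : R -> R -> R) : Prop :=
  C1_R2 f /\ C1_R2 (D1 f) /\ C1_R2 (D2 f).

Definition bernstein2 (N1 N2 : nat) (g : R -> R -> R) (x1 x2 : R) : R :=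
  sum_f_R0 (fun j1 =>
    sum_f_R0 (fun j2 =>
      Binomial.C N1 j1 * Binomial.C N2 j2
      * x1 ^ j1 * (1 - x1) ^ (N1 - j1)
      * x2 ^ j2 * (1 - x2) ^ (N2 - j2)
      * g (INR j1 / INR N1) (INR j2 / INR N2)) N2) N1.

(* f o A with A = Id - (kappa/N) M, M = [[d, -d], [-1, 1]]. *)
Definition compA (d kappa : R) (N : nat) (f : R -> R -> R) : R -> R -> R :=
  fun x1 x2 =>
    f (x1 - kappa / INR N * (d * x1 - d * x2))
      (x2 - kappa / INR N * (- x1 + x2)).

Definition Ld (d kappa : R) (f : R -> R -> R) (x1 x2 : R) : R :=
  x1 * (1 - x1) / 2 * D1 (D1 f) x1 x2
  + x2 * (1 - x2) / (2 * d) * D2 (D2 f) x1 x2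
  - kappa * ((d * x1 - d * x2) * D1 f x1 x2 + (- x1 + x2) * D2 f x1 x2).

(* Main.v *)
Require Import Defs.
From Stdlib Require Import Reals Lra Lia.
From Coquelicot Require Import Coquelicot.
Open Scope R_scope.

Definition bw (n:nat) (p:R) (j:nat) := Binomial.C n j * p^j * (1-p)^(n-j).
Definition Ex n p (h:nat->R) := sum_f_R0 (fun j => bw n p j * h j) n.

Lemma Ex_ext n p h1 h2 : (forall j, (j<=n)%nat -> h1 j = h2 j) -> Ex n p h1 = Ex n p h2.
Proof. intros H; unfold Ex; apply sum_eq; intros i Hi; rewrite H; auto. Qed.

Lemma Ex_plus n p h1 h2 : Ex n p (fun j => h1 j + h2 j) = Ex n p h1 + Ex n p h2.
Proof. unfold Ex; rewrite <- plus_sum; apply sum_eq; intros; ring. Qed.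

Lemma Ex_scal n p c h : Ex n p (fun j => c * h j) = c * Ex n p h.
Proof. unfold Ex; rewrite scal_sum; apply sum_eq; intros; ring. Qed.

Lemma C_nonneg n k : 0 <= Binomial.C n k.
Proof. unfold Binomial.C. apply Rle_mult_inv_pos. apply pos_INR.
  apply Rmult_lt_0_compat; apply lt_0_INR, Factorial.lt_O_fact. Qed.

Lemma bw_nonneg n p j : 0 <= p <= 1 -> 0 <= bw n p j.
Proof. intros Hp; unfold bw. apply Rmult_le_pos; [apply Rmult_le_pos|];
  [apply C_nonneg| apply pow_le; lra | apply pow_le; lra]. Qed.

Lemma Ex_mono n p h1 h2 : 0 <= p <= 1 -> (forall j, (j<=n)%nat -> h1 j <= h2 j) -> Ex n p h1 <= Ex n p h2.
Proof. intros Hp H; unfold Ex; apply sum_Rle; intros i Hi.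
  apply Rmult_le_compat_l; [apply bw_nonneg; auto| auto]. Qed.

Lemma Ex_0 p h : Ex 0 p h = h 0%nat.
Proof. unfold Ex, bw; simpl. rewrite C_n_0. ring. Qed.

Lemma bw_pascal n p i : (i < n)%nat -> bw (S n) p (S i) = p * bw n p i + (1-p) * bw n p (S i).
Proof. intros H. unfold bw. rewrite <- pascal by auto.
  replace (S n - S i)%nat with (S (n - S i)) by lia.
  replace (n - i)%nat with (S (n - S i)) by lia. simpl. ring. Qed.

Lemma Ex_rec n p h : Ex (S n) p h = Ex n p (fun j => p * h (S j) + (1-p) * h j).
Proof.
  destruct n as [|m].
  { unfold Ex, bw; simpl. rewrite !C_n_0, !C_n_n. ring. }
  unfold Ex. rewrite decomp_sum by lia. simpl Init.Nat.pred.
  transitivity (bw (S (S m)) p 0 * h 0%nat + (sum_f_R0 (fun j => p * (bw (S m) p j * h (S j))) (S m)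
     + sum_f_R0 (fun j => (1-p) * (bw (S m) p (S j) * h (S j))) m)).
  - f_equal. rewrite !tech5.
      match goal with |- ?A + ?a = ?B + ?b + ?C => replace (B + b + C) with ((B + C) + b) by ring end.
      rewrite <- plus_sum. f_equal.
      * apply sum_eq. intros i Hi. rewrite bw_pascal by lia. ring.
      * unfold bw. rewrite !Nat.sub_diag, !C_n_n. simpl. ring.
  - rewrite (sum_eq (fun j => bw (S m) p j * (p * h (S j) + (1-p) * h j)) (fun j => p*(bw (S m) p j * h (S j)) + (1-p)*(bw (S m) p j * h j))) by (intros; ring).
    rewrite plus_sum. rewrite (decomp_sum (fun j => (1-p) * (bw (S m) p j * h j)) (S m)) by lia. simpl Init.Nat.pred.
    assert (Hb : bw (S (S m)) p 0 = (1-p) * bw (S m) p 0).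
    { unfold bw. rewrite !C_n_0. simpl. ring. }
    rewrite Hb. ring.
Qed.

Lemma Ex_const n p c : Ex n p (fun _ => c) = c.
Proof. induction n. rewrite Ex_0; auto. rewrite Ex_rec.
  rewrite (Ex_ext _ _ _ (fun _ => c)) by (intros; ring). auto. Qed.

Lemma Ex_lin n p (g1 g2 g3 : nat -> R) a1 a2 a3 c :
  Ex n p (fun j => a1 * g1 j + a2 * g2 j + a3 * g3 j + c) = a1 * Ex n p g1 + a2 * Ex n p g2 + a3 * Ex n p g3 + c.
Proof. rewrite !Ex_plus, !Ex_scal, Ex_const. auto. Qed.

Definition J n p j := INR j - INR n * p.

Lemma J_S n p j : J (S n) p (S j) = J n p j + (1-p) /\ J (S n) p j = J n p j - p.
Proof. unfold J; rewrite !S_INR; split; ring. Qed.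

Lemma m1 n p : Ex n p (J n p) = 0.
Proof. induction n. rewrite Ex_0; unfold J; simpl; ring.
  rewrite Ex_rec. rewrite (Ex_ext _ _ _ (J n p)). auto.
  intros j _. destruct (J_S n p j) as [-> ->]. ring. Qed.

Lemma m2 n p : Ex n p (fun j => J n p j ^ 2) = INR n * p * (1-p).
Proof. induction n. rewrite Ex_0; unfold J; simpl; ring.
  rewrite Ex_rec. rewrite (Ex_ext _ _ _ (fun j => 1 * (J n p j ^2) + 0 * J n p j + 0 * J n p j + p * (1-p))).
  rewrite Ex_lin, IHn, m1. rewrite S_INR. ring.
  intros j _. destruct (J_S n p j) as [-> ->]. ring. Qed.

Lemma m4 n p : Ex n p (fun j => J n p j ^ 4) = 3 * INR n * (INR n - 1) * (p*(1-p))^2 + INR n * p * (1-p) * (1 - 3*p*(1-p)).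
Proof. induction n. rewrite Ex_0; unfold J; simpl; ring.
  rewrite Ex_rec. rewrite (Ex_ext _ _ _ (fun j => 1 * (J n p j ^4) + (6*p*(1-p)) * (J n p j ^ 2) + (4*p*(1-p)*((1-p)^2-p^2)) * J n p j + p * (1-p)*(p^3+(1-p)^3))).
  rewrite Ex_lin, IHn, m1, m2. rewrite S_INR. ring.
  intros j _. destruct (J_S n p j) as [-> ->]. ring. Qed.

Lemma a1 n p : (0 < n)%nat -> Ex n p (fun j => INR j / INR n - p) = 0.
Proof. intros Hn. assert (0 < INR n) by (apply lt_0_INR; auto).
  rewrite (Ex_ext _ _ _ (fun j => / INR n * J n p j)). rewrite Ex_scal, m1. ring.
  intros; unfold J; field; lra. Qed.

Lemma a2 n p : (0 < n)%nat -> Ex n p (fun j => (INR j / INR n - p)^2) = p * (1-p) / INR n.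
Proof. intros Hn. assert (0 < INR n) by (apply lt_0_INR; auto).
  rewrite (Ex_ext _ _ _ (fun j => (/ INR n)^2 * J n p j ^ 2)). rewrite Ex_scal, m2. field; lra.
  intros; unfold J; field; lra. Qed.

Lemma a4 n p : (0 < n)%nat -> 0 <= p <= 1 -> Ex n p (fun j => (INR j / INR n - p)^4) <= 2 / INR n ^ 2.
Proof. intros Hn Hp. assert (1 <= INR n) by (apply (le_INR 1); lia).
  rewrite (Ex_ext _ _ _ (fun j => (/ INR n)^4 * J n p j ^ 4)). rewrite Ex_scal, m4.
  assert (0 <= (p - 1/2)^2) by apply pow2_ge_0. assert (0 <= p * (1-p) <= 1/4) by (split; nra).
  set (q := p * (1-p)) in *.
  assert (3 * INR n * (INR n - 1) * q^2 + INR n * q * (1 - 3 * q) <= 2 * INR n ^ 2).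
  { assert (0 <= q^2 <= 1/16) by nra. assert (0 <= q * (1 - 3*q) <= 1) by nra.
    assert (0 <= INR n * (INR n - 1)) by nra.
    assert (3 * INR n * (INR n - 1) * q^2 <= INR n * INR n) by nra.
    assert (INR n * (q * (1 - 3 * q)) <= INR n * INR n) by nra. nra. }
  replace (2 / INR n ^2) with ((/ INR n)^4 * (2 * INR n ^2)) by (field; lra).
  apply Rmult_le_compat_l. apply pow_le. apply Rlt_le, Rinv_0_lt_compat; lra. eapply Rle_trans; [|exact H2]; right; unfold q; ring.
  intros; unfold J; field; lra. Qed.

Definition E2 N N2 x1 x2 (h : nat -> nat -> R) := Ex N x1 (fun j1 => Ex N2 x2 (fun j2 => h j1 j2)).

Lemma bern_E2 N N2 g x1 x2 : bernstein2 N N2 g x1 x2 = E2 N N2 x1 x2 (fun j1 j2 => g (INR j1/INR N) (INR j2/INR N2)).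
Proof. unfold bernstein2, E2, Ex. apply sum_eq; intros j1 _.
  rewrite scal_sum. apply sum_eq; intros j2 _. unfold bw. ring. Qed.

Lemma E2_ext N N2 x1 x2 h1 h2 : (forall j1 j2, (j1 <= N)%nat -> (j2 <= N2)%nat -> h1 j1 j2 = h2 j1 j2) ->
  E2 N N2 x1 x2 h1 = E2 N N2 x1 x2 h2.
Proof. intros H; unfold E2; apply Ex_ext; intros; apply Ex_ext; intros; auto. Qed.

Lemma E2_plus N N2 x1 x2 h1 h2 : E2 N N2 x1 x2 (fun j1 j2 => h1 j1 j2 + h2 j1 j2) = E2 N N2 x1 x2 h1 + E2 N N2 x1 x2 h2.
Proof. unfold E2. rewrite <- Ex_plus. apply Ex_ext; intros; apply Ex_plus. Qed.

Lemma E2_scal N N2 x1 x2 c h : E2 N N2 x1 x2 (fun j1 j2 => c * h j1 j2) = c * E2 N N2 x1 x2 h.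
Proof. unfold E2. rewrite <- Ex_scal. apply Ex_ext; intros; apply Ex_scal. Qed.

Lemma E2_const N N2 x1 x2 c : E2 N N2 x1 x2 (fun _ _ => c) = c.
Proof. unfold E2. rewrite (Ex_ext _ _ _ (fun _ => c)). apply Ex_const. intros; apply Ex_const. Qed.

Lemma E2_mono N N2 x1 x2 h1 h2 : 0 <= x1 <= 1 -> 0 <= x2 <= 1 ->
  (forall j1 j2, (j1 <= N)%nat -> (j2 <= N2)%nat -> h1 j1 j2 <= h2 j1 j2) ->
  E2 N N2 x1 x2 h1 <= E2 N N2 x1 x2 h2.
Proof. intros H1 H2 H; unfold E2; apply Ex_mono; auto; intros; apply Ex_mono; auto. Qed.

Lemma E2_abs N N2 x1 x2 h : 0 <= x1 <= 1 -> 0 <= x2 <= 1 ->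
  Rabs (E2 N N2 x1 x2 h) <= E2 N N2 x1 x2 (fun j1 j2 => Rabs (h j1 j2)).
Proof. intros H1 H2. apply Rabs_le. split.
  - replace (- E2 N N2 x1 x2 (fun j1 j2 => Rabs (h j1 j2))) with (E2 N N2 x1 x2 (fun j1 j2 => -1 * Rabs (h j1 j2))).
    apply E2_mono; auto. intros. unfold Rabs; destruct Rcase_abs; lra.
    rewrite E2_scal; ring.
  - apply E2_mono; auto. intros; apply Rle_abs. Qed.

Lemma E2_poly N N2 x1 x2 k0 k1 k2 k3 k4 k5 : (0 < N)%nat -> (0 < N2)%nat ->
  E2 N N2 x1 x2 (fun j1 j2 => let a := INR j1 / INR N - x1 in let b := INR j2 / INR N2 - x2 in
     k0 + k1 * a + k2 * b + k3 * a^2 + k4 * b^2 + k5 * a * b)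
  = k0 + k3 * (x1 * (1-x1) / INR N) + k4 * (x2 * (1-x2) / INR N2).
Proof. intros HN HN2. unfold E2.
  set (a := fun j1 => INR j1 / INR N - x1). set (b := fun j2 => INR j2 / INR N2 - x2).
  rewrite (Ex_ext _ _ _ (fun j1 => k1 * a j1 + k3 * (a j1)^2 + 0 * a j1 + (k0 + k4 * (x2 * (1-x2) / INR N2)))).
  rewrite Ex_lin. unfold a. rewrite a1, a2 by auto. ring.
  intros j1 _. rewrite (Ex_ext _ _ _ (fun j2 => (k2 + k5 * a j1) * b j2 + k4 * (b j2)^2 + 0 * b j2 + (k0 + k1 * a j1 + k3 * (a j1)^2))).
  rewrite Ex_lin. unfold b. rewrite a1, a2 by auto. ring.
  intros j2 _. unfold a, b. simpl. ring. Qed.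

Lemma E2_a4 N N2 x1 x2 : (0 < N)%nat -> (0 < N2)%nat -> 0 <= x1 <= 1 -> 0 <= x2 <= 1 ->
  E2 N N2 x1 x2 (fun j1 j2 => (INR j1 / INR N - x1)^4) <= 2 / INR N ^ 2 /\
  E2 N N2 x1 x2 (fun j1 j2 => (INR j2 / INR N2 - x2)^4) <= 2 / INR N2 ^ 2.
Proof. intros. unfold E2. split.
  - rewrite (Ex_ext _ _ _ (fun j1 => (INR j1 / INR N - x1)^4)). apply a4; auto.
    intros; apply Ex_const.
  - rewrite Ex_const. apply a4; auto. Qed.
Lemma taylor1 (g : R -> R) a b : (forall t, ex_derive g t) -> (forall t, ex_derive (Derive g) t) ->
 exists c, Rabs (c - a) <= Rabs (b - a) /\
   g b = g a + Derive g a * (b - a) + / 2 * Derive (Derive g) c * (b - a)^2.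
Proof.
  intros Hg Hg'.
  destruct (Req_dec a b) as [<-|Hab].
  { exists a. split. right; auto. ring. }
  assert (Hba : (b - a)^2 <> 0) by (apply pow_nonzero; lra).
  set (K := (g b - g a - Derive g a * (b - a)) / (b - a)^2).
  set (F := fun t => g b - g t - Derive g t * (b - t) - K * (b - t)^2).
  assert (HF : forall t, derivable_pt_lim F t ((b - t) * (2 * K - Derive (Derive g) t))).
  { intros t. apply is_derive_Reals. unfold F. auto_derive.
    - repeat split; auto.
    - change (fun x : R => g x) with g. change (fun x : R => Derive g x) with (Derive g). ring. }
  assert (Fa : F a = 0). { unfold F, K. field. intro H; apply Hba; rewrite H; ring. }
  assert (Fb : F b = 0). { unfold F. ring. }
  assert (exists c, (b - c) * (2 * K - Derive (Derive g) c) = 0 /\ Rabs (c - a) < Rabs (b - a) /\ c <> b).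
  { destruct (Rlt_or_le a b) as [Hl|Hl].
    - destruct (MVT_cor2 F _ a b Hl (fun c _ => HF c)) as [c [Hc1 Hc2]].
      exists c. split. rewrite Fa, Fb in Hc1. apply Rmult_eq_reg_r with (b - a). lra. lra.
      split. rewrite !Rabs_right by lra. lra. lra.
    - assert (Hl' : b < a) by lra.
      destruct (MVT_cor2 F _ b a Hl' (fun c _ => HF c)) as [c [Hc1 Hc2]].
      exists c. split. rewrite Fa, Fb in Hc1. apply Rmult_eq_reg_r with (a - b). lra. lra.
      split. rewrite !Rabs_left by lra. lra. lra. }
  destruct H as [c [H1 [H2 H3]]].
  exists c. split. lra.
  assert (2 * K = Derive (Derive g) c).
  { apply Rmult_integral in H1. destruct H1; lra. }
  replace (/ 2 * Derive (Derive g) c) with K by lra.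
  unfold K. field. intro H0; apply Hba; rewrite H0; ring.
Qed.

Lemma bounded_box g lo hi : lo <= hi ->
  (forall x y, lo <= x <= hi -> lo <= y <= hi -> continuity_2d_pt g x y) ->
  exists K, forall x y, lo <= x <= hi -> lo <= y <= hi -> Rabs (g x y) <= K.
Proof.
  intros Hlh Hc.
  destruct (uniform_continuity_2d g lo hi lo hi Hc (mkposreal 1 Rlt_0_1)) as [[del Hdel] Hu].
  simpl in Hu.
  assert (Hk : forall k : nat, forall p1 p2 q1 q2, lo <= p1 <= hi -> lo <= p2 <= hi ->
     lo <= q1 <= hi -> lo <= q2 <= hi ->
     Rabs (p1 - q1) <= INR k * (del / 2) -> Rabs (p2 - q2) <= INR k * (del / 2) ->
     Rabs (g p1 p2 - g q1 q2) <= INR k).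
  { induction k; intros p1 p2 q1 q2 Hp1 Hp2 Hq1 Hq2 H1 H2.
    - simpl in *. assert (Rabs (p1 - q1) = 0) by (pose proof (Rabs_pos (p1 - q1)); lra).
      assert (Rabs (p2 - q2) = 0) by (pose proof (Rabs_pos (p2 - q2)); lra).
      apply Rabs_eq_0 in H. apply Rabs_eq_0 in H0.
      replace p1 with q1 by lra. replace p2 with q2 by lra. rewrite Rminus_diag, Rabs_R0. lra.
    - set (s := INR k / INR (S k)).
      assert (HSk : 0 < INR (S k)) by (apply lt_0_INR; lia).
      assert (Hs : 0 <= s <= 1). { unfold s. rewrite S_INR in *. pose proof (pos_INR k).
        split. apply Rle_mult_inv_pos; lra. apply Rmult_le_reg_r with (INR k + 1). lra.
        unfold Rdiv. rewrite Rmult_assoc, Rinv_l by lra. lra. }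
      assert (Hs1 : s * INR (S k) = INR k). { unfold s. field. lra. }
      set (r1 := q1 + s * (p1 - q1)). set (r2 := q2 + s * (p2 - q2)).
      assert (Hr1 : lo <= r1 <= hi). { unfold r1. split; nra. }
      assert (Hr2 : lo <= r2 <= hi). { unfold r2. split; nra. }
      assert (E1 : Rabs (r1 - q1) = s * Rabs (p1 - q1)).
      { unfold r1. replace (q1 + s * (p1 - q1) - q1) with (s * (p1 - q1)) by ring.
        rewrite Rabs_mult, (Rabs_right s) by lra. auto. }
      assert (E2 : Rabs (r2 - q2) = s * Rabs (p2 - q2)).
      { unfold r2. replace (q2 + s * (p2 - q2) - q2) with (s * (p2 - q2)) by ring.
        rewrite Rabs_mult, (Rabs_right s) by lra. auto. }
      assert (F1 : Rabs (p1 - r1) = (1 - s) * Rabs (p1 - q1)).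
      { unfold r1. replace (p1 - (q1 + s * (p1 - q1))) with ((1 - s) * (p1 - q1)) by ring.
        rewrite Rabs_mult, (Rabs_right (1 - s)) by lra. auto. }
      assert (F2 : Rabs (p2 - r2) = (1 - s) * Rabs (p2 - q2)).
      { unfold r2. replace (p2 - (q2 + s * (p2 - q2))) with ((1 - s) * (p2 - q2)) by ring.
        rewrite Rabs_mult, (Rabs_right (1 - s)) by lra. auto. }
      assert (Hsk1 : (1 - s) * INR (S k) = 1) by (rewrite S_INR in *; nra).
      assert (IH1 : Rabs (g r1 r2 - g q1 q2) <= INR k).
      { apply IHk; auto.
        - rewrite E1, <- Hs1. pose proof (Rabs_pos (p1 - q1)).
          rewrite Rmult_assoc. apply Rmult_le_compat_l; lra.
        - rewrite E2, <- Hs1. pose proof (Rabs_pos (p2 - q2)).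
          rewrite Rmult_assoc. apply Rmult_le_compat_l; lra. }
      assert (U : Rabs (g p1 p2 - g r1 r2) < 1).
      { apply Hu; auto.
        - rewrite F1. apply Rle_lt_trans with ((1 - s) * (INR (S k) * (del / 2))).
          apply Rmult_le_compat_l; lra. rewrite <- Rmult_assoc, Hsk1. lra.
        - rewrite F2. apply Rle_lt_trans with ((1 - s) * (INR (S k) * (del / 2))).
          apply Rmult_le_compat_l; lra. rewrite <- Rmult_assoc, Hsk1. lra. }
      replace (g p1 p2 - g q1 q2) with ((g p1 p2 - g r1 r2) + (g r1 r2 - g q1 q2)) by ring.
      eapply Rle_trans. apply Rabs_triang. rewrite S_INR. lra. }
  destruct (INR_unbounded ((hi - lo) / (del / 2))) as [k Hk'].
  exists (Rabs (g lo lo) + INR k). intros x y Hx Hy.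
  assert (Hd : (hi - lo) <= INR k * (del / 2)).
  { apply Rmult_lt_compat_r with (r := del / 2) in Hk'. unfold Rdiv in Hk'.
    rewrite Rmult_assoc, Rinv_l in Hk' by lra. lra. lra. }
  assert (Rabs (g x y - g lo lo) <= INR k).
  { apply Hk; try lra; rewrite Rabs_right; lra. }
  replace (g x y) with ((g x y - g lo lo) + g lo lo) by ring.
  eapply Rle_trans. apply Rabs_triang. lra.
Qed.

Lemma taylor2 f x1 x2 z1 z2 : C2_R2 f ->
  exists xi zeta eta, Rabs (xi - x1) <= Rabs (z1 - x1) /\ Rabs (zeta - x2) <= Rabs (z2 - x2) /\
    Rabs (eta - x2) <= Rabs (z2 - x2) /\
    f z1 z2 = f x1 x2 + D1 f x1 x2 * (z1 - x1) + D2 f x1 x2 * (z2 - x2)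
      + / 2 * D1 (D1 f) xi z2 * (z1 - x1)^2 + / 2 * D2 (D2 f) x1 eta * (z2 - x2)^2
      + D2 (D1 f) x1 zeta * (z1 - x1) * (z2 - x2).
Proof.
  intros [Hf [Hf1 Hf2]].
  destruct (taylor1 (fun t => f t z2) x1 z1) as [xi [Hxi Exi]].
  { intros t; apply (Hf t z2). }
  { intros t; apply (Hf1 t z2). }
  destruct (taylor1 (fun t => f x1 t) x2 z2) as [eta [Heta Eeta]].
  { intros t; apply (Hf x1 t). }
  { intros t; apply (Hf2 x1 t). }
  destruct (MVT_cor4 (fun t => D1 f x1 t) (fun t => D2 (D1 f) x1 t) x2 (Rabs (z2 - x2))) with (b := z2)
    as [zeta [Ez Hz]].
  { intros c _. apply Derive_correct. apply (Hf1 x1 c). }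
  { right; auto. }
  exists xi, zeta, eta. split; [auto|split;[auto|split;[auto|]]].
  change (Derive (fun t => f t z2) x1) with (D1 f x1 z2) in Exi.
  change (Derive (Derive (fun t => f t z2)) xi) with (D1 (D1 f) xi z2) in Exi.
  change (Derive (fun t => f x1 t) x2) with (D2 f x1 x2) in Eeta.
  change (Derive (Derive (fun t => f x1 t)) eta) with (D2 (D2 f) x1 eta) in Eeta.
  simpl in Ez.
  rewrite Exi, Eeta. assert (D1 f x1 z2 = D1 f x1 x2 + D2 (D1 f) x1 zeta * (z2 - x2)) by lra.
  rewrite H. ring.
Qed.

Lemma delta_bound g x1 x2 u v h1 h2 eps del K :
  0 < del -> (forall u v, Rabs (u - x1) < del -> Rabs (v - x2) < del -> Rabs (g u v - g x1 x2) < eps) ->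
  Rabs (g u v) <= K -> Rabs (g x1 x2) <= K ->
  Rabs (u - x1) <= Rabs h1 -> Rabs (v - x2) <= Rabs h2 ->
  Rabs (g u v - g x1 x2) <= eps + 2 * K * (h1^2 + h2^2) / del^2.
Proof.
  intros Hd Hc Hu Hx H1 H2.
  assert (0 <= K) by (pose proof (Rabs_pos (g x1 x2)); lra).
  assert (0 < del^2) by nra.
  assert (Heps : 0 <= eps).
  { assert (Hq : Rabs (g x1 x2 - g x1 x2) < eps) by (apply Hc; rewrite Rminus_diag, Rabs_R0; lra).
    rewrite Rminus_diag, Rabs_R0 in Hq. lra. }
  destruct (Rlt_or_le (Rabs h1) del) as [L1|L1]; [destruct (Rlt_or_le (Rabs h2) del) as [L2|L2]|].
  - assert (Rabs (g u v - g x1 x2) < eps) by (apply Hc; lra).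
    assert (0 <= 2 * K * (h1^2 + h2^2) / del^2).
    { apply Rle_mult_inv_pos; [|auto]. pose proof (pow2_ge_0 h1); pose proof (pow2_ge_0 h2); nra. }
    lra.
  - assert (del^2 <= h2^2). { rewrite <- (pow2_abs h2). apply pow_incr. lra. }
    assert (2 * K <= 2 * K * (h1^2 + h2^2) / del^2).
    { apply Rmult_le_reg_r with (del^2); auto.
      replace (2*K*(h1^2+h2^2)/del^2*del^2) with (2*K*(h1^2+h2^2)) by (field; lra).
      pose proof (pow2_ge_0 h1). nra. }
    pose proof (Rabs_triang (g u v) (- g x1 x2)) as T. rewrite Rabs_Ropp in T. unfold Rminus. lra.
  - assert (del^2 <= h1^2). { rewrite <- (pow2_abs h1). apply pow_incr. lra. }
    assert (2 * K <= 2 * K * (h1^2 + h2^2) / del^2).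
    { apply Rmult_le_reg_r with (del^2); auto.
      replace (2*K*(h1^2+h2^2)/del^2*del^2) with (2*K*(h1^2+h2^2)) by (field; lra).
      pose proof (pow2_ge_0 h2). nra. }
    pose proof (Rabs_triang (g u v) (- g x1 x2)) as T. rewrite Rabs_Ropp in T. unfold Rminus. lra.
Qed.

Definition Tq f x1 x2 h1 h2 := f x1 x2 + D1 f x1 x2 * h1 + D2 f x1 x2 * h2
  + / 2 * D1 (D1 f) x1 x2 * h1^2 + / 2 * D2 (D2 f) x1 x2 * h2^2 + D2 (D1 f) x1 x2 * h1 * h2.

Lemma point_bound f x1 x2 rho eps del K : C2_R2 f -> 0 <= x1 <= 1 -> 0 <= x2 <= 1 -> 0 < del ->
  (forall g, g = D1 (D1 f) \/ g = D2 (D2 f) \/ g = D2 (D1 f) ->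
     (forall u v, Rabs (u - x1) < del -> Rabs (v - x2) < del -> Rabs (g u v - g x1 x2) < eps) /\
     (forall u v, - rho <= u <= 1 + rho -> - rho <= v <= 1 + rho -> Rabs (g u v) <= K)) ->
  forall z1 z2, Rabs (z1 - x1) <= rho -> Rabs (z2 - x2) <= rho ->
  Rabs (f z1 z2 - Tq f x1 x2 (z1 - x1) (z2 - x2)) <=
    (eps + 2 * K * ((z1 - x1)^2 + (z2 - x2)^2) / del^2) * ((z1 - x1)^2 + (z2 - x2)^2).
Proof.
  intros Hf Hx1 Hx2 Hd Hg z1 z2 Hz1 Hz2.
  destruct (taylor2 f x1 x2 z1 z2 Hf) as [xi [zeta [eta [Hxi [Hze [Het E]]]]]].
  set (h1 := z1 - x1) in *. set (h2 := z2 - x2) in *.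
  set (W := eps + 2 * K * (h1^2 + h2^2) / del^2).
  assert (Hin : forall u v, Rabs (u - x1) <= Rabs h1 -> Rabs (v - x2) <= Rabs h2 ->
            - rho <= u <= 1 + rho /\ - rho <= v <= 1 + rho).
  { intros u v Hu Hv. 
    assert (Rabs (u - x1) <= rho) by lra. assert (Rabs (v - x2) <= rho) by lra.
    apply Rabs_le_between in H. apply Rabs_le_between in H0. lra. }
  assert (Hx : - rho <= x1 <= 1 + rho /\ - rho <= x2 <= 1 + rho).
  { apply Hin; rewrite Rminus_diag, Rabs_R0; apply Rabs_pos. }
  assert (DA : Rabs (D1 (D1 f) xi z2 - D1 (D1 f) x1 x2) <= W).
  { destruct (Hg (D1 (D1 f))) as [C B]; auto.
    destruct (Hin xi z2) as [I1 I2]; [lra|right; reflexivity|].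
    apply delta_bound with (K := K); auto. apply B; tauto. right; reflexivity. }
  assert (DB : Rabs (D2 (D2 f) x1 eta - D2 (D2 f) x1 x2) <= W).
  { destruct (Hg (D2 (D2 f))) as [C B]; auto.
    destruct (Hin x1 eta) as [I1 I2]; [rewrite Rminus_diag, Rabs_R0; apply Rabs_pos|lra|].
    apply delta_bound with (K := K); auto. apply B; tauto.
    rewrite Rminus_diag, Rabs_R0; apply Rabs_pos. }
  assert (DC : Rabs (D2 (D1 f) x1 zeta - D2 (D1 f) x1 x2) <= W).
  { destruct (Hg (D2 (D1 f))) as [C B]; auto.
    destruct (Hin x1 zeta) as [I1 I2]; [rewrite Rminus_diag, Rabs_R0; apply Rabs_pos|lra|].
    apply delta_bound with (K := K); auto. apply B; tauto.
    rewrite Rminus_diag, Rabs_R0; apply Rabs_pos. }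
  rewrite E. unfold Tq.
  set (A := D1 (D1 f) xi z2 - D1 (D1 f) x1 x2) in *.
  set (B := D2 (D2 f) x1 eta - D2 (D2 f) x1 x2) in *.
  set (C := D2 (D1 f) x1 zeta - D2 (D1 f) x1 x2) in *.
  replace (f x1 x2 + D1 f x1 x2 * h1 + D2 f x1 x2 * h2 + / 2 * D1 (D1 f) xi z2 * h1 ^ 2 +
    / 2 * D2 (D2 f) x1 eta * h2 ^ 2 + D2 (D1 f) x1 zeta * h1 * h2 -
    (f x1 x2 + D1 f x1 x2 * h1 + D2 f x1 x2 * h2 + / 2 * D1 (D1 f) x1 x2 * h1 ^ 2 +
     / 2 * D2 (D2 f) x1 x2 * h2 ^ 2 + D2 (D1 f) x1 x2 * h1 * h2))
   with (/2 * A * h1^2 + /2 * B * h2^2 + C * (h1 * h2)) by (unfold A, B, C; ring).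
  eapply Rle_trans. apply Rabs_triang. eapply Rle_trans. apply Rplus_le_compat_r. apply Rabs_triang.
  rewrite !Rabs_mult. rewrite Rabs_inv, (Rabs_right 2) by lra.
  rewrite (Rabs_right (h1^2)) by (apply Rle_ge, pow2_ge_0).
  rewrite (Rabs_right (h2^2)) by (apply Rle_ge, pow2_ge_0).
  assert (Hp : Rabs h1 * Rabs h2 <= (h1^2 + h2^2) / 2).
  { rewrite <- (pow2_abs h1), <- (pow2_abs h2). pose proof (pow2_ge_0 (Rabs h1 - Rabs h2)). nra. }
  pose proof (pow2_ge_0 h1). pose proof (pow2_ge_0 h2).
  pose proof (Rabs_pos A). pose proof (Rabs_pos B). pose proof (Rabs_pos C).
  pose proof (Rabs_pos h1). pose proof (Rabs_pos h2).
  assert (Rabs A * h1^2 <= W * h1^2) by (apply Rmult_le_compat_r; lra).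
  assert (Rabs B * h2^2 <= W * h2^2) by (apply Rmult_le_compat_r; lra).
  assert (Rabs C * (Rabs h1 * Rabs h2) <= W * ((h1^2 + h2^2)/2)).
  { apply Rmult_le_compat; try lra. apply Rmult_le_pos; lra. }
  nra.
Qed.

Lemma E2_quad N N2 x1 x2 p0 pa pb r0 ra rb q0 q1 q2 q3 q4 q5 : (0 < N)%nat -> (0 < N2)%nat ->
  E2 N N2 x1 x2 (fun j1 j2 => let a := INR j1 / INR N - x1 in let b := INR j2 / INR N2 - x2 in
     let u := p0 + pa * a + pb * b in let v := r0 + ra * a + rb * b in
     q0 + q1 * u + q2 * v + q3 * u^2 + q4 * v^2 + q5 * u * v)
  = (q0 + q1 * p0 + q2 * r0 + q3 * p0^2 + q4 * r0^2 + q5 * p0 * r0)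
    + (q3 * pa^2 + q4 * ra^2 + q5 * pa * ra) * (x1 * (1-x1) / INR N)
    + (q3 * pb^2 + q4 * rb^2 + q5 * pb * rb) * (x2 * (1-x2) / INR N2).
Proof. intros HN HN2.
  rewrite <- (E2_poly N N2 x1 x2 _ (q1 * pa + q2 * ra + 2 * q3 * p0 * pa + 2 * q4 * r0 * ra + q5 * (p0 * ra + pa * r0))
     (q1 * pb + q2 * rb + 2 * q3 * p0 * pb + 2 * q4 * r0 * rb + q5 * (p0 * rb + pb * r0))
     _ _ (2 * q3 * pa * pb + 2 * q4 * ra * rb + q5 * (pa * rb + pb * ra))) by auto.
  apply E2_ext. intros. simpl. ring. Qed.

Definition Zf1 d kappa N N2 (j1 j2 : nat) :=
  INR j1 / INR N - kappa / INR N * (d * (INR j1 / INR N) - d * (INR j2 / INR N2)).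
Definition Zf2 (kappa : R) N N2 (j1 j2 : nat) :=
  INR j2 / INR N2 - kappa / INR N * (- (INR j1 / INR N) + INR j2 / INR N2).

Definition Phi d kappa x1 x2 q1 q2 q3 q4 q5 t :=
 let e := x1 - x2 in let p0 := - kappa * d * e in let r0 := kappa * e in
 let pa := 1 - kappa * d * t in let pb := kappa * d * t in let ra := kappa * t in let rb := 1 - kappa * t in
 q1 * p0 + q2 * r0 + t * (q3 * p0^2 + q4 * r0^2 + q5 * p0 * r0)
 + (q3 * pa^2 + q4 * ra^2 + q5 * pa * ra) * (x1 * (1 - x1))
 + (q3 * pb^2 + q4 * rb^2 + q5 * pb * rb) * (x2 * (1 - x2)) / d.

Lemma main_term f d kappa x1 x2 N N2 : 0 < d -> (0 < N)%nat -> INR N2 = d * INR N ->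
  INR N * (E2 N N2 x1 x2 (fun j1 j2 => Tq f x1 x2 (Zf1 d kappa N N2 j1 j2 - x1) (Zf2 kappa N N2 j1 j2 - x2)) - f x1 x2)
  = Phi d kappa x1 x2 (D1 f x1 x2) (D2 f x1 x2) (/2 * D1 (D1 f) x1 x2) (/2 * D2 (D2 f) x1 x2) (D2 (D1 f) x1 x2) (/ INR N).
Proof.
  intros Hd HN HN2.
  assert (0 < INR N) by (apply lt_0_INR; auto).
  assert (0 < N2)%nat. { apply INR_lt. simpl. nra. }
  set (c := kappa / INR N).
  rewrite (E2_ext _ _ _ _ _ (fun j1 j2 => let a := INR j1 / INR N - x1 in let b := INR j2 / INR N2 - x2 in
     let u := (- c * d * (x1 - x2)) + (1 - c * d) * a + (c * d) * b in
     let v := (c * (x1 - x2)) + c * a + (1 - c) * b in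
     f x1 x2 + D1 f x1 x2 * u + D2 f x1 x2 * v + (/2 * D1 (D1 f) x1 x2) * u^2 + (/2 * D2 (D2 f) x1 x2) * v^2
     + D2 (D1 f) x1 x2 * u * v)).
  2:{ intros. unfold Tq, Zf1, Zf2. simpl. unfold c. ring. }
  rewrite E2_quad by auto. unfold Phi, c. rewrite HN2. field. lra.
Qed.

Lemma Phi_cont d kappa x1 x2 q1 q2 q3 q4 q5 : 0 < d ->
  forall eps, 0 < eps -> exists alp, 0 < alp /\ forall t, 0 < t < alp ->
  Rabs (Phi d kappa x1 x2 q1 q2 q3 q4 q5 t - Phi d kappa x1 x2 q1 q2 q3 q4 q5 0) < eps.
Proof.
  intros Hd eps Heps.
  assert (Hc : continuity_pt (Phi d kappa x1 x2 q1 q2 q3 q4 q5) 0).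
  { apply derivable_continuous_pt.
    exists (Derive (Phi d kappa x1 x2 q1 q2 q3 q4 q5) 0). apply is_derive_Reals.
    apply Derive_correct. unfold Phi. auto_derive. auto. }
  destruct (Hc eps Heps) as [alp [Ha H]]. exists alp. split; auto.
  intros t Ht. apply (H t). split. split. exact I. lra.
  simpl. unfold R_dist. rewrite Rminus_0_r, Rabs_right; lra.
Qed.
Lemma sq_bound a w c : w^2 <= c^2 -> (a - w)^2 <= 2 * a^2 + 2 * c^2.
Proof. intros H. pose proof (pow2_ge_0 (a + w)). nra. Qed.

Lemma pt_H a b c d y1 y2 : 0 <= c -> 0 < d <= 1 -> 0 <= y1 <= 1 -> 0 <= y2 <= 1 ->
  let h1 := a - c * (d * y1 - d * y2) in let h2 := b - c * (- y1 + y2) in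
  h1^2 + h2^2 <= 4 * c^2 + 2 * a^2 + 2 * b^2 /\
  (h1^2 + h2^2)^2 <= 12 * a^4 + 12 * b^4 + 48 * c^4.
Proof.
  intros Hc Hd Hy1 Hy2 h1 h2.
  assert (W1 : (c * (d * y1 - d * y2))^2 <= c^2).
  { replace ((c * (d * y1 - d * y2))^2) with (c^2 * (d^2 * (y1 - y2)^2)) by ring.
    rewrite <- (Rmult_1_r (c^2)) at 2. apply Rmult_le_compat_l. apply pow2_ge_0.
    assert (d^2 <= 1) by nra. assert ((y1 - y2)^2 <= 1) by nra.
    pose proof (pow2_ge_0 d). pose proof (pow2_ge_0 (y1 - y2)). nra. }
  assert (W2 : (c * (- y1 + y2))^2 <= c^2).
  { replace ((c * (- y1 + y2))^2) with (c^2 * (y1 - y2)^2) by ring.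
    rewrite <- (Rmult_1_r (c^2)) at 2. apply Rmult_le_compat_l. apply pow2_ge_0. nra. }
  pose proof (sq_bound a _ _ W1). pose proof (sq_bound b _ _ W2).
  fold h1 in H. fold h2 in H0.
  split. lra.
  assert (0 <= h1^2 + h2^2) by (pose proof (pow2_ge_0 h1); pose proof (pow2_ge_0 h2); lra).
  apply Rle_trans with ((4 * c^2 + 2 * a^2 + 2 * b^2)^2).
  apply pow_incr; lra.
  pose proof (pow2_ge_0 (2*c^2 - a^2)). pose proof (pow2_ge_0 (2*c^2 - b^2)). pose proof (pow2_ge_0 (a^2 - b^2)).
  nra.
Qed.

Lemma rem_estimate f d kappa x1 x2 N N2 ep del K :
  C2_R2 f -> 0 < d <= 1 -> 0 < kappa -> 0 <= x1 <= 1 -> 0 <= x2 <= 1 -> (0 < N)%nat ->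
  INR N2 = d * INR N -> 0 < del -> 0 <= ep -> 0 <= K ->
  (forall g, g = D1 (D1 f) \/ g = D2 (D2 f) \/ g = D2 (D1 f) ->
     (forall u v, Rabs (u - x1) < del -> Rabs (v - x2) < del -> Rabs (g u v - g x1 x2) < ep) /\
     (forall u v, - (1 + kappa) <= u <= 1 + (1 + kappa) -> - (1 + kappa) <= v <= 1 + (1 + kappa) -> Rabs (g u v) <= K)) ->
  INR N * Rabs (E2 N N2 x1 x2 (fun j1 j2 => f (Zf1 d kappa N N2 j1 j2) (Zf2 kappa N N2 j1 j2)
      - Tq f x1 x2 (Zf1 d kappa N N2 j1 j2 - x1) (Zf2 kappa N N2 j1 j2 - x2)))
  <= ep * (2 + 2 / d + 4 * kappa^2) + 2 * K / del^2 * (24 + 24 / d^2 + 48 * kappa^4) / INR N.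
Proof.
  intros Hf Hd Hk Hx1 Hx2 HN HN2 Hdel Hep HK Hg.
  assert (Hn : 1 <= INR N) by (apply (le_INR 1); lia).
  assert (HN2' : (0 < N2)%nat). { apply INR_lt. simpl. nra. }
  set (n := INR N) in *.
  set (c := kappa / n).
  assert (Hc : 0 < c <= kappa).
  { unfold c. split. apply Rdiv_lt_0_compat; lra.
    apply Rmult_le_reg_r with n. lra. unfold Rdiv. rewrite Rmult_assoc, Rinv_l by lra. nra. }
  set (c' := 2 * K / del^2).
  assert (Hc' : 0 <= c'). { unfold c'. apply Rle_mult_inv_pos. lra. nra. }
  assert (S1 : Rabs (E2 N N2 x1 x2 (fun j1 j2 => f (Zf1 d kappa N N2 j1 j2) (Zf2 kappa N N2 j1 j2)
      - Tq f x1 x2 (Zf1 d kappa N N2 j1 j2 - x1) (Zf2 kappa N N2 j1 j2 - x2)))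
    <= E2 N N2 x1 x2 (fun j1 j2 => ep * (let a := INR j1 / INR N - x1 in let b := INR j2 / INR N2 - x2 in
            4 * c^2 + 0 * a + 0 * b + 2 * a^2 + 2 * b^2 + 0 * a * b)
         + c' * ((12 * (INR j1 / INR N - x1)^4 + 12 * (INR j2 / INR N2 - x2)^4) + 48 * c^4))).
  { eapply Rle_trans. apply E2_abs; auto. apply E2_mono; auto.
    intros j1 j2 Hj1 Hj2.
    set (y1 := INR j1 / n). set (y2 := INR j2 / INR N2).
    assert (Hy1 : 0 <= y1 <= 1).
    { unfold y1. split. apply Rle_mult_inv_pos. apply pos_INR. lra.
      apply Rmult_le_reg_r with n. lra. unfold Rdiv. rewrite Rmult_assoc, Rinv_l by lra.
      rewrite Rmult_1_r, Rmult_1_l. unfold n. apply le_INR. auto. }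
    assert (Hy2 : 0 <= y2 <= 1).
    { assert (0 < INR N2) by (apply lt_0_INR; auto).
      unfold y2. split. apply Rle_mult_inv_pos. apply pos_INR. lra.
      apply Rmult_le_reg_r with (INR N2). lra. unfold Rdiv. rewrite Rmult_assoc, Rinv_l by lra.
      rewrite Rmult_1_r, Rmult_1_l. apply le_INR. auto. }
    set (a := y1 - x1). set (b := y2 - x2).
    assert (E1 : Zf1 d kappa N N2 j1 j2 - x1 = a - c * (d * y1 - d * y2)) by (unfold Zf1, a, c; fold n y1 y2; ring).
    assert (E2' : Zf2 kappa N N2 j1 j2 - x2 = b - c * (- y1 + y2)) by (unfold Zf2, b, c; fold n y1 y2; ring).
    destruct (pt_H a b c d y1 y2) as [P1 P2]; try lra.
    cbv zeta in P1, P2.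
    assert (B1 : Rabs (Zf1 d kappa N N2 j1 j2 - x1) <= 1 + kappa).
    { rewrite E1. eapply Rle_trans. apply Rabs_triang. rewrite Rabs_Ropp, Rabs_mult, (Rabs_right c) by lra.
      assert (Rabs a <= 1) by (apply Rabs_le; unfold a; lra).
      assert (Rabs (d * y1 - d * y2) <= 1) by (apply Rabs_le; split; nra).
      pose proof (Rabs_pos (d * y1 - d * y2)). nra. }
    assert (B2 : Rabs (Zf2 kappa N N2 j1 j2 - x2) <= 1 + kappa).
    { rewrite E2'. eapply Rle_trans. apply Rabs_triang. rewrite Rabs_Ropp, Rabs_mult, (Rabs_right c) by lra.
      assert (Rabs b <= 1) by (apply Rabs_le; unfold b; lra).
      assert (Rabs (- y1 + y2) <= 1) by (apply Rabs_le; split; nra).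
      pose proof (Rabs_pos (- y1 + y2)). nra. }
    pose proof (point_bound f x1 x2 (1 + kappa) ep del K Hf Hx1 Hx2 Hdel Hg _ _ B1 B2) as PB.
    rewrite E1, E2' in PB. rewrite E1, E2'.
    set (H := (a - c * (d * y1 - d * y2))^2 + (b - c * (- y1 + y2))^2) in *.
    eapply Rle_trans. apply PB.
    cbv zeta. change (INR j1 / INR N - x1) with a.
    assert (0 <= H) by (unfold H; pose proof (pow2_ge_0 (a - c * (d * y1 - d * y2))); pose proof (pow2_ge_0 (b - c * (- y1 + y2))); lra).
    replace ((ep + 2 * K * H / del ^ 2) * H) with (ep * H + c' * H^2) by (unfold c'; field; lra).
    assert (ep * H <= ep * (4 * c^2 + 2 * a^2 + 2 * b^2)) by (apply Rmult_le_compat_l; lra).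
    assert (c' * H^2 <= c' * (12 * a^4 + 12 * b^4 + 48 * c^4)) by (apply Rmult_le_compat_l; lra).
    lra. }
  rewrite E2_plus, !E2_scal in S1. rewrite E2_poly in S1 by auto.
  rewrite E2_plus, E2_plus, E2_const, !E2_scal in S1.
  destruct (E2_a4 N N2 x1 x2) as [EA EB]; auto. fold n in EA, EB, S1.
  assert (HN2p : 0 < INR N2) by (apply lt_0_INR; auto).
  assert (A1 : n * (4 * c^2 + 2 * (x1 * (1 - x1) / n) + 2 * (x2 * (1 - x2) / INR N2)) <= 2 + 2 / d + 4 * kappa^2).
  { replace (n * (4 * c^2 + 2 * (x1 * (1 - x1) / n) + 2 * (x2 * (1 - x2) / INR N2)))
      with (4 * kappa^2 * / n + 2 * (x1 * (1 - x1)) + 2 * (x2 * (1 - x2)) * / d)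
      by (unfold c; rewrite HN2; field; lra).
    assert (/ n <= 1) by (rewrite <- Rinv_1; apply Rinv_le_contravar; lra).
    assert (0 < / n) by (apply Rinv_0_lt_compat; lra).
    assert (0 < / d) by (apply Rinv_0_lt_compat; lra).
    assert (x1 * (1 - x1) <= 1) by nra. assert (0 <= x2 * (1 - x2) <= 1) by nra.
    assert (0 <= kappa^2) by apply pow2_ge_0.
    unfold Rdiv. nra. }
  set (EA' := E2 N N2 x1 x2 (fun j1 _ => (INR j1 / n - x1) ^ 4)) in *.
  set (EB' := E2 N N2 x1 x2 (fun _ j2 => (INR j2 / INR N2 - x2) ^ 4)) in *.
  assert (A2 : n * (12 * EA' + 12 * EB' + 48 * c^4) <= (24 + 24 / d^2 + 48 * kappa^4) / n).
  { assert (n * (12 * EA' + 12 * EB' + 48 * c^4) <= n * (12 * (2 / n^2) + 12 * (2 / INR N2^2) + 48 * c^4)).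
    { apply Rmult_le_compat_l; lra. }
    eapply Rle_trans. apply H.
    replace (n * (12 * (2 / n^2) + 12 * (2 / INR N2^2) + 48 * c^4))
      with ((24 + 24 / d^2 + 48 * kappa^4 * / n^2) / n) by (unfold c; rewrite HN2; field; lra).
    apply Rmult_le_compat_r. left; apply Rinv_0_lt_compat; lra.
    assert (/ n^2 <= 1) by (rewrite <- Rinv_1; apply Rinv_le_contravar; nra).
    assert (0 <= kappa^4) by (replace (kappa^4) with ((kappa^2)^2) by ring; apply pow2_ge_0).
    nra. }
  assert (0 <= Rabs (E2 N N2 x1 x2 (fun j1 j2 => f (Zf1 d kappa N N2 j1 j2) (Zf2 kappa N N2 j1 j2)
      - Tq f x1 x2 (Zf1 d kappa N N2 j1 j2 - x1) (Zf2 kappa N N2 j1 j2 - x2)))) by apply Rabs_pos.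
  apply Rle_trans with (n * (ep * (4 * c ^ 2 + 2 * (x1 * (1 - x1) / n) + 2 * (x2 * (1 - x2) / INR N2))
      + c' * (12 * EA' + 12 * EB' + 48 * c ^ 4))).
  { apply Rmult_le_compat_l. lra. eapply Rle_trans. apply S1. right. ring. }
  replace (c' * (24 + 24 / d ^ 2 + 48 * kappa ^ 4) / n) with (c' * ((24 + 24 / d ^ 2 + 48 * kappa ^ 4) / n)) by (unfold Rdiv; ring).
  rewrite Rmult_plus_distr_l.
  apply Rplus_le_compat.
  - replace (n * (ep * (4 * c ^ 2 + 2 * (x1 * (1 - x1) / n) + 2 * (x2 * (1 - x2) / INR N2))))
      with (ep * (n * (4 * c ^ 2 + 2 * (x1 * (1 - x1) / n) + 2 * (x2 * (1 - x2) / INR N2)))) by ring.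
    apply Rmult_le_compat_l; lra.
  - replace (n * (c' * (12 * EA' + 12 * EB' + 48 * c ^ 4))) with (c' * (n * (12 * EA' + 12 * EB' + 48 * c ^ 4))) by ring.
    apply Rmult_le_compat_l; lra.
Qed.

Theorem lemma4 (d kappa : R) (f : R -> R -> R) (x1 x2 : R) :
  0 < d -> d <= 1 -> 0 < kappa ->
  C2_R2 f -> f 0 0 = 0 -> f 1 1 = 0 ->
  0 <= x1 <= 1 -> 0 <= x2 <= 1 ->
  forall eps : R, 0 < eps ->
  exists N0 : nat, forall N N2 : nat, (N0 <= N)%nat -> INR N2 = d * INR N ->
    Rabs (INR N * (bernstein2 N N2 (compA d kappa N f) x1 x2 - f x1 x2)
          - Ld d kappa f x1 x2) < eps.
Proof.
  intros Hd0 Hd1 Hk Hf _ _ Hx1 Hx2 eps Heps.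
  pose proof Hf as [HfA [HfB HfC]].
  set (C1 := 2 + 2 / d + 4 * kappa^2).
  assert (HC1 : 0 < C1).
  { unfold C1. assert (0 < / d) by (apply Rinv_0_lt_compat; lra). pose proof (pow2_ge_0 kappa).
    unfold Rdiv. lra. }
  set (ep := eps / (4 * C1)).
  assert (Hep : 0 < ep) by (unfold ep; apply Rdiv_lt_0_compat; lra).
  destruct (proj1 (proj2 (proj2 (proj2 (HfB x1 x2)))) (mkposreal ep Hep)) as [dA HA].
  destruct (proj2 (proj2 (proj2 (proj2 (HfB x1 x2)))) (mkposreal ep Hep)) as [dC HC].
  destruct (proj2 (proj2 (proj2 (proj2 (HfC x1 x2)))) (mkposreal ep Hep)) as [dB HB].
  simpl in HA, HB, HC.
  set (del := Rmin dA (Rmin dB dC)).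
  assert (Hdel : 0 < del).
  { unfold del. destruct dA, dB, dC; simpl. repeat apply Rmin_pos; auto. }
  assert (LA : del <= dA) by (unfold del; apply Rmin_l).
  assert (LB : del <= dB) by (unfold del; eapply Rle_trans; [apply Rmin_r| apply Rmin_l]).
  assert (LC : del <= dC) by (unfold del; eapply Rle_trans; [apply Rmin_r| apply Rmin_r]).
  set (lo := - (1 + kappa)). set (hi := 1 + (1 + kappa)).
  assert (Hlh : lo <= hi) by (unfold lo, hi; lra).
  destruct (bounded_box (D1 (D1 f)) lo hi Hlh) as [KA BA].
  { intros; apply (HfB x y). }
  destruct (bounded_box (D2 (D2 f)) lo hi Hlh) as [KB BB].
  { intros; apply (HfC x y). }
  destruct (bounded_box (D2 (D1 f)) lo hi Hlh) as [KC BC].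
  { intros; apply (HfB x y). }
  set (K := Rmax (Rmax KA KB) (Rmax KC 0)).
  assert (HK : 0 <= K) by (unfold K; eapply Rle_trans; [|apply Rmax_r]; apply Rmax_r).
  assert (KA' : KA <= K) by (unfold K; eapply Rle_trans; [|apply Rmax_l]; apply Rmax_l).
  assert (KB' : KB <= K) by (unfold K; eapply Rle_trans; [|apply Rmax_l]; apply Rmax_r).
  assert (KC' : KC <= K) by (unfold K; eapply Rle_trans; [|apply Rmax_r]; apply Rmax_l).
  assert (Hg : forall g, g = D1 (D1 f) \/ g = D2 (D2 f) \/ g = D2 (D1 f) ->
     (forall u v, Rabs (u - x1) < del -> Rabs (v - x2) < del -> Rabs (g u v - g x1 x2) < ep) /\
     (forall u v, - (1 + kappa) <= u <= 1 + (1 + kappa) -> - (1 + kappa) <= v <= 1 + (1 + kappa) -> Rabs (g u v) <= K)).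
  { intros g [ -> | [ -> | -> ] ]; split; intros u v Hu Hv.
    - apply HA; lra.
    - eapply Rle_trans; [apply BA; auto | auto].
    - apply HB; lra.
    - eapply Rle_trans; [apply BB; auto | auto].
    - apply HC; lra.
    - eapply Rle_trans; [apply BC; auto | auto]. }
  set (q1 := D1 f x1 x2). set (q2 := D2 f x1 x2). set (q3 := / 2 * D1 (D1 f) x1 x2).
  set (q4 := / 2 * D2 (D2 f) x1 x2). set (q5 := D2 (D1 f) x1 x2).
  destruct (Phi_cont d kappa x1 x2 q1 q2 q3 q4 q5 Hd0 (eps / 4)) as [alp [Halp Hphi]]. lra.
  set (C2 := 24 + 24 / d^2 + 48 * kappa^4).
  assert (HC2 : 0 < C2).
  { unfold C2. assert (0 < / d^2) by (apply Rinv_0_lt_compat; nra).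
    assert (0 <= kappa^4) by (replace (kappa^4) with ((kappa^2)^2) by ring; apply pow2_ge_0).
    unfold Rdiv. lra. }
  set (c' := 2 * K / del^2).
  assert (Hc' : 0 <= c'). { unfold c'. apply Rle_mult_inv_pos. lra. nra. }
  destruct (INR_unbounded (Rmax 1 (Rmax (/ alp) (c' * C2 / (eps / 4))))) as [n0 Hn0].
  exists n0. intros N N2 HN HN2.
  assert (HNn : INR n0 <= INR N) by (apply le_INR; auto).
  set (M := Rmax 1 (Rmax (/ alp) (c' * C2 / (eps / 4)))) in *.
  assert (M1 : 1 <= M) by apply Rmax_l.
  assert (M2 : / alp <= M) by (eapply Rle_trans; [|apply Rmax_r]; apply Rmax_l).
  assert (M3 : c' * C2 / (eps / 4) <= M) by (eapply Rle_trans; [|apply Rmax_r]; apply Rmax_r).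
  assert (HNpos : (0 < N)%nat). { apply INR_lt. simpl. lra. }
  set (n := INR N) in *.
  assert (Hn1 : 1 < n) by lra.
  rewrite bern_E2.
  change (fun j1 j2 : nat => compA d kappa N f (INR j1 / INR N) (INR j2 / INR N2))
    with (fun j1 j2 : nat => f (Zf1 d kappa N N2 j1 j2) (Zf2 kappa N N2 j1 j2)).
  rewrite (E2_ext _ _ _ _ _ (fun j1 j2 => Tq f x1 x2 (Zf1 d kappa N N2 j1 j2 - x1) (Zf2 kappa N N2 j1 j2 - x2)
     + (f (Zf1 d kappa N N2 j1 j2) (Zf2 kappa N N2 j1 j2)
        - Tq f x1 x2 (Zf1 d kappa N N2 j1 j2 - x1) (Zf2 kappa N N2 j1 j2 - x2)))) by (intros; ring).
  rewrite E2_plus.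
  set (ET := E2 N N2 x1 x2 (fun j1 j2 => Tq f x1 x2 (Zf1 d kappa N N2 j1 j2 - x1) (Zf2 kappa N N2 j1 j2 - x2))).
  set (ER := E2 N N2 x1 x2 (fun j1 j2 => f (Zf1 d kappa N N2 j1 j2) (Zf2 kappa N N2 j1 j2)
        - Tq f x1 x2 (Zf1 d kappa N N2 j1 j2 - x1) (Zf2 kappa N N2 j1 j2 - x2))).
  assert (MT : n * (ET - f x1 x2) = Phi d kappa x1 x2 q1 q2 q3 q4 q5 (/ n)).
  { unfold ET, n. apply main_term; auto. }
  assert (L0 : Ld d kappa f x1 x2 = Phi d kappa x1 x2 q1 q2 q3 q4 q5 0).
  { unfold Ld, Phi, q1, q2, q3, q4, q5. field. lra. }
  assert (RE : n * Rabs ER <= ep * C1 + c' * C2 / n).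
  { unfold ER, n, C1, C2, c'. apply rem_estimate; auto; lra. }
  assert (P1 : Rabs (Phi d kappa x1 x2 q1 q2 q3 q4 q5 (/ n) - Phi d kappa x1 x2 q1 q2 q3 q4 q5 0) < eps / 4).
  { apply Hphi. split. apply Rinv_0_lt_compat; lra.
    apply Rlt_le_trans with (/ M). apply Rinv_lt_contravar; nra.
    replace alp with (/ / alp) by (field; lra). apply Rinv_le_contravar.
    apply Rinv_0_lt_compat; lra. auto. }
  assert (P2 : ep * C1 = eps / 4) by (unfold ep; field; lra).
  assert (P3 : c' * C2 / n < eps / 4).
  { apply Rmult_lt_reg_r with n. lra.
    replace (c' * C2 / n * n) with (c' * C2) by (field; lra).
    assert (c' * C2 <= M * (eps / 4)).
    { replace (c' * C2) with (c' * C2 / (eps / 4) * (eps / 4)) by (field; lra).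
      apply Rmult_le_compat_r; lra. }
    nra. }
  replace (n * (ET + ER - f x1 x2) - Ld d kappa f x1 x2)
    with ((n * (ET - f x1 x2) - Ld d kappa f x1 x2) + n * ER) by ring.
  rewrite MT, L0.
  eapply Rle_lt_trans. apply Rabs_triang.
  rewrite Rabs_mult, (Rabs_right n) by lra. lra.
Qed.
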